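(* Let $\mathfrak g=\mathfrak k+_\rho V$ be the semidirect sum of a finite-dimensional real Lie algebra $\mathfrak k$ and a commutative ideal $V$ via a representation $\rho:\mathfrak k\to\operatorname{End}(V)$. Let $f_1,\dots,f_l$ be polynomials on $\mathfrak g^*$ each satisfying $f_i(M,v)=f_i(M+L,v)$ for all $(M,v)\in\mathfrak g^*$ and $L\in\mathrm{St}_{\rho^*}(v)^\perp$, and write $f_i(M,v)=f_{i,v}(\pi_v(M))$. Suppose that for generic $v\in V^*$ the functions $f_{1,v},\dots,f_{l,v}$ pairwise commute with respect to the Lie–Poisson bracket on $\mathrm{St}_{\rho^*}(v)^*$ and form a complete commutative set in $S(\mathrm{St}_{\rho^*}(v))$. Then $\{f_1,\dots,f_l\}\cup V$ (elements of $V$ viewed as linear functions on $\mathfrak g^*$) is a complete commutative set in $S(\mathfrak g)$.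
   Context: Elements of $\mathfrak g^*=\mathfrak k^*\oplus V^*$ are pairs $(M,v)$. $\rho^*:\mathfrak k\to\operatorname{End}(V^* )$ is the dual representation, $\mathrm{St}_{\rho^*}(v)=\{X\in\mathfrak k\mid\rho^*(X)v=0\}$, $\mathrm{St}_{\rho^*}(v)^\perp\subset\mathfrak k^*$ its annihilator, $\pi_v:\mathfrak k^*\to\mathrm{St}_{\rho^*}(v)^*$ restriction. For a Lie algebra $\mathfrak l$, $S(\mathfrak l)$ is the polynomial algebra on $\mathfrak l^*$ with Lie–Poisson bracket $\{f,g\}(x)=\langle x,[df(x),dg(x)]\rangle$, and $\Phi_x(\xi,\eta)=\langle x,[\xi,\eta]\rangle$. A set of polynomials in $S(\mathfrak l)$ is a complete commutative set if its elements pairwise Poisson-commute and, at generic $x\in\mathfrak l^*$, their differentials span a maximal $\Phi_x$-isotropic subspace of $\mathfrak l$ (equivalently, they generate a subalgebra of transcendence degree $\frac12(\dim\mathfrak l+\operatorname{ind}\mathfrak l)$, where $\operatorname{ind}\mathfrak l$ is the generic corank of $\Phi_x$). *)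

(* Defs.v *)
From HB Require Import structures.
From mathcomp Require Import all_boot all_order all_algebra.
From mathcomp Require Import mpoly.
From mathcomp Require Import reals.

Set Implicit Arguments.
Unset Strict Implicit.
Unset Printing Implicit Defensive.

Import Order.TTheory GRing.Theory Num.Theory.
Local Open Scope ring_scope.

(* Coordinates: a finite-dimensional real Lie algebra k is R^n ('rV_n) with a
   bracket br; V = R^m ('rV_m); duals are identified with row vectors via the
   standard pairing [dot]. *)

Section Defs.
Variable R : realType.

Definition dot (p : nat) (a b : 'rV[R]_p) : R := \sum_(i < p) a 0 i * b 0 i.

Definition is_lie_algebra (n : nat) (br : 'rV[R]_n -> 'rV[R]_n -> 'rV[R]_n) : Prop :=
  [/\ (forall (a : R) x y z, br (a *: x + y) z = a *: br x z + br y z),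
      (forall (a : R) x y z, br z (a *: x + y) = a *: br z x + br z y),
      (forall x, br x x = 0) &
      (forall x y z, br x (br y z) + br y (br z x) + br z (br x y) = 0)].

(* representation rho : k -> End(V), written as the action act X u = rho(X) u *)
Definition is_representation (n m : nat) (br : 'rV[R]_n -> 'rV[R]_n -> 'rV[R]_n)
  (act : 'rV[R]_n -> 'rV[R]_m -> 'rV[R]_m) : Prop :=
  [/\ (forall (a : R) X Y u, act (a *: X + Y) u = a *: act X u + act Y u),
      (forall (a : R) X u w, act X (a *: u + w) = a *: act X u + act X w) &
      (forall X Y u, act (br X Y) u = act X (act Y u) - act Y (act X u))].

(* dual representation rho^* on V^* : <rho^*(X) v, u> = - <v, rho(X) u> *)
Definition rho_dual (n m : nat) (act : 'rV[R]_n -> 'rV[R]_m -> 'rV[R]_m)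
  (X : 'rV[R]_n) (v : 'rV[R]_m) : 'rV[R]_m :=
  \row_(j < m) - dot v (act X (delta_mx 0 j)).

Definition Stab (n m : nat) (act : 'rV[R]_n -> 'rV[R]_m -> 'rV[R]_m)
  (v : 'rV[R]_m) (X : 'rV[R]_n) : Prop := rho_dual act X v = 0.

Definition Stab_perp (n m : nat) (act : 'rV[R]_n -> 'rV[R]_m -> 'rV[R]_m)
  (v : 'rV[R]_m) (L : 'rV[R]_n) : Prop :=
  forall X, Stab act v X -> dot L X = 0.

Definition semidirect_bracket (n m : nat) (br : 'rV[R]_n -> 'rV[R]_n -> 'rV[R]_n)
  (act : 'rV[R]_n -> 'rV[R]_m -> 'rV[R]_m) (a b : 'rV[R]_(n + m)) : 'rV[R]_(n + m) :=
  row_mx (br (lsubmx a) (lsubmx b))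
         (act (lsubmx a) (rsubmx b) - act (lsubmx b) (rsubmx a)).

Definition ev (N : nat) (p : {mpoly R[N]}) (x : 'rV[R]_N) : R := p.@[fun i => x 0 i].

(* differential d p(x), an element of l = l^** = R^N *)
Definition grad (N : nat) (p : {mpoly R[N]}) (x : 'rV[R]_N) : 'rV[R]_N :=
  \row_(i < N) ev (mderiv i p) x.

Definition span_of (N : nat) (s : seq 'rV[R]_N) (a : 'rV[R]_N) : Prop :=
  exists c : 'I_(size s) -> R, a = \sum_(i < size s) c i *: s`_i.

Definition isotropic (N : nat) (B : 'rV[R]_N -> 'rV[R]_N -> R) (W : 'rV[R]_N -> Prop) :=
  forall a b, W a -> W b -> B a b = 0.

Definition max_isotropic (N : nat) (B : 'rV[R]_N -> 'rV[R]_N -> R)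
  (U W : 'rV[R]_N -> Prop) : Prop :=
  [/\ (forall a, W a -> U a), isotropic B W &
      forall W' : 'rV[R]_N -> Prop, (forall a, W a -> W' a) ->
        (forall a, W' a -> U a) -> isotropic B W' -> forall a, W' a -> W a].

Definition complete_commutative_set (N : nat)
  (lbr : 'rV[R]_N -> 'rV[R]_N -> 'rV[R]_N) (S : seq {mpoly R[N]}) : Prop :=
  (forall f g, f \in S -> g \in S -> forall x, dot x (lbr (grad f x) (grad g x)) = 0) /\
  exists q : {mpoly R[N]}, q != 0 /\
    forall x, ev q x != 0 ->
      max_isotropic (fun a b => dot x (lbr a b)) (fun _ => True)
                    (span_of [seq grad f x | f <- S]).

(* For f on g^* = R^(n+m) and fixed v, the function M |-> f(M,v) on k^*;
   this is f_v o pi_v.  Its differential in M. *)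
Definition gradM (n m : nat) (f : {mpoly R[n + m]}) (M : 'rV[R]_n) (v : 'rV[R]_m)
  : 'rV[R]_n := lsubmx (grad f (row_mx M v)).

(* f_{1,v},...,f_{l,v} pairwise commute for the Lie-Poisson bracket on
   St(v)^* and form a complete commutative set in S(St(v)); everything is
   pulled back to k^* along pi_v (genericity in xi = pi_v(M) is expressed by
   a nonzero polynomial in M). *)
Definition complete_commutative_on_stab (n m : nat)
  (br : 'rV[R]_n -> 'rV[R]_n -> 'rV[R]_n) (act : 'rV[R]_n -> 'rV[R]_m -> 'rV[R]_m)
  (fs : seq {mpoly R[n + m]}) (v : 'rV[R]_m) : Prop :=
  (forall f g, f \in fs -> g \in fs -> forall M,
      dot M (br (gradM f M v) (gradM g M v)) = 0) /\
  exists q : {mpoly R[n]}, q != 0 /\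
    forall M, ev q M != 0 ->
      max_isotropic (fun a b => dot M (br a b)) (Stab act v)
                    (span_of [seq gradM f M v | f <- fs]).

End Defs.

(* Main.v *)
Require Import Defs.
From HB Require Import structures.
From mathcomp Require Import all_boot all_order all_algebra.
From mathcomp Require Import mpoly.
From mathcomp Require Import reals.
From mathcomp Require Import ring lra zify.
From Stdlib Require Import Classical.
Import GRing.Theory Num.Theory.
Local Open Scope ring_scope.
Set Implicit Arguments.
Unset Strict Implicit.
Unset Printing Implicit Defensive.

Lemma tay_alg (R : comRingType) (a b c d e k t : R) : (a + t * c + t ^+ 2 * e) * (b + t * d + t ^+ 2 * k) =
  a * b + t * (c * b + a * d) +
  t ^+ 2 * (c * d + a * k + b * e + t * (c * k + d * e) + t * t * (e * k)).
Proof. ring. Qed.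

Lemma tay_alg2 (R : comRingType) (a c e t : R) : t * (c + t * e) = (a + t * c + t ^+ 2 * e) - a.
Proof. ring. Qed.

Section Poly.
Variable R : realType.
Variable N : nat.
Implicit Types (f g : {mpoly R[N]}).
Variables (x y : 'I_N -> R).

Definition Dd f : R := \sum_i y i * (mderiv i f).@[x].

Definition Tay f := exists h : {poly R}, forall t : R,
  f.@[fun i => x i + t * y i] = f.@[x] + t * Dd f + t ^+ 2 * h.[t].

Lemma DdD f g : Dd (f + g) = Dd f + Dd g.
Proof.
rewrite /Dd -big_split /=; apply: eq_bigr => i _.
by rewrite mderivD mevalD mulrDr.
Qed.

Lemma DdM f g : Dd (f * g) = Dd f * g.@[x] + f.@[x] * Dd g.
Proof.
rewrite /Dd mulr_suml mulr_sumr -big_split /=; apply: eq_bigr => i _.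
rewrite mderivM mevalD !mevalM; ring.
Qed.

Lemma DdC c : Dd c%:MP = 0.
Proof. by rewrite /Dd big1 // => i _; rewrite mderivC meval0 mulr0. Qed.

Lemma submm_ (k : 'I_N) : (U_(k) - U_(k))%MM = 0%MM.
Proof. by apply/mnmP => i; rewrite mnmBE subnn mnm0E. Qed.

Lemma DdX k : Dd 'X_k = y k.
Proof.
rewrite /Dd (bigD1 k) //= big1 ?addr0.
  by rewrite mderivX mnm1E eqxx mevalZ submm_ mpolyX0 meval1 !mulr1.
by move=> i ik; rewrite mderivX mnm1E eq_sym (negbTE ik) scale0r meval0 mulr0.
Qed.

Lemma TayC c : Tay c%:MP.
Proof. by exists 0 => t; rewrite !mevalC DdC horner0; ring. Qed.

Lemma TayX k : Tay 'X_k.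
Proof. by exists 0 => t; rewrite !mevalXU DdX horner0; ring. Qed.

Lemma TayD f g : Tay f -> Tay g -> Tay (f + g).
Proof.
move=> [h1 H1] [h2 H2]; exists (h1 + h2) => t.
by rewrite !mevalD H1 H2 DdD hornerD; ring.
Qed.

Lemma TayM f g : Tay f -> Tay g -> Tay (f * g).
Proof.
move=> [h1 H1] [h2 H2].
exists ((Dd f * Dd g)%:P + f.@[x] *: h2 + g.@[x] *: h1
        + 'X * (Dd f *: h2 + Dd g *: h1) + 'X ^+ 2 * (h1 * h2)) => t.
rewrite !mevalM H1 H2 DdM.
rewrite !(hornerD, hornerM, hornerZ, hornerC, hornerX, hornerXn).
move: (f.@[x]) (g.@[x]) (Dd f) (Dd g) (h1.[t]) (h2.[t]) => a b c d e k.
exact: tay_alg.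
Qed.

Lemma tay f : Tay f.
Proof.
rewrite (mpolyE f); elim/big_ind: _ => //.
- by rewrite -(mpolyC0); exact: TayC.
- exact: TayD.
move=> m _; rewrite -mul_mpolyC; apply: TayM; first exact: TayC.
rewrite mpolyXE_id; elim/big_ind: _ => //.
- by rewrite -mpolyC1; exact: TayC.
- exact: TayM.
move=> i _; elim: (m i) => [|k IH]; first by rewrite expr0 -mpolyC1; exact: TayC.
by rewrite exprS; apply: TayM => //; exact: TayX.
Qed.

Lemma Dd0 f : (forall t : R, f.@[fun i => x i + t * y i] = f.@[x]) -> Dd f = 0.
Proof.
have [h H] := tay f => Hc.
set Q : {poly R} := (Dd f)%:P + 'X * h.
have HQ : forall t, t != 0 -> Q.[t] = 0.
  move=> t t0; have := H t; rewrite Hc => /eqP.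
  rewrite eq_sym -subr_eq0 => /eqP E.
  have : t * Q.[t] = 0.
    rewrite /Q hornerD hornerC hornerM hornerX.
    by rewrite -[RHS]E (@tay_alg2 _ (f.@[x])).
  by move/eqP; rewrite mulf_eq0 (negbTE t0) /= => /eqP.
suff Q0 : Q = 0.
  by have := congr1 (horner^~ 0) Q0; rewrite /Q hornerD hornerC hornerM hornerX mul0r addr0 horner0.
apply: (@roots_geq_poly_eq0 _ _ [seq (i.+1)%:R | i <- iota 0 (size Q)]).
- apply/allP => z /mapP [i _ ->]; apply/eqP; apply: HQ.
  by rewrite pnatr_eq0.
- rewrite map_inj_uniq ?iota_uniq // => i j /eqP; rewrite eqr_nat => /eqP [].
  done.
- by rewrite size_map size_iota.
Qed.

End Poly.
Section Van.
Variable R : realType.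

Lemma mpoly_rmorph_eq N (S : comNzRingType) (f g : {rmorphism {mpoly R[N]} -> S}) :
  (forall c, f c%:MP = g c%:MP) -> (forall i, f 'X_i = g 'X_i) -> forall p, f p = g p.
Proof.
move=> HC HX p; rewrite (mpolyE p) !rmorph_sum; apply: eq_bigr => m _.
rewrite -mul_mpolyC !rmorphM HC; congr (_ * _).
rewrite mpolyXE_id !rmorph_prod; apply: eq_bigr => i _.
by rewrite !rmorphXn HX.
Qed.

Lemma meval_zero N (p : {mpoly R[N]}) : p.@[fun _ => 0] = p@_0.
Proof.
apply: (@mpoly_rmorph_eq N R (meval (fun _ : 'I_N => 0 : R)) (mcoeff 0)) => [c|i] /=.
  by rewrite mevalC mcoeffC eqxx mulr1.
by rewrite mevalXU mcoeffX mnm1_eq0.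
Qed.

Lemma deriv_van N (p : {mpoly R[N]}) : (forall v, p.@[v] = 0) ->
  forall i v, (mderiv i p).@[v] = 0.
Proof.
move=> H i v.
have := @Dd0 R N v (fun j => (j == i)%:R) p.
rewrite /Dd (bigD1 i) //= big1 ?addr0 ?eqxx ?mul1r.
  by apply => t; rewrite !H.
by move=> j /negbTE ->; rewrite mul0r.
Qed.

Lemma van_coef N d : forall (p : {mpoly R[N]}), (forall v, p.@[v] = 0) ->
  forall m, mdeg m = d -> p@_m = 0.
Proof.
elim: d => [|d IH] p H m Hm.
  move/eqP: Hm; rewrite mdeg_eq0 => /eqP ->.
  by rewrite -meval_zero H.
have [i Hi] : exists i, (0 < m i)%N.
  apply/existsP; apply: contraT; rewrite negb_exists => /forallP Hall.
  have : m = 0%MM by apply/mnmP => i; rewrite mnm0E; move: (Hall i); rewrite lt0n negbK => /eqP.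
  by move=> m0; move: Hm; rewrite m0 mdeg0.
set m' := (m - U_(i))%MM.
have Em : m = (m' + U_(i))%MM.
  apply/mnmP => j; rewrite mnmDE mnmBE mnm1E.
  case: (eqVneq i j) => [<-|_]; last by rewrite subn0 addn0.
  by rewrite subnK.
have Hd : mdeg m' = d by move: Hm; rewrite Em mdegD mdeg1 addn1 => [[]].
have := IH _ (@deriv_van N p H i) m' Hd.
rewrite mcoeff_mderiv -Em => /eqP; rewrite mulrn_eq0 /= => /eqP //.
Qed.

Lemma mpoly_van N (p : {mpoly R[N]}) : (forall v, p.@[v] = 0) -> p = 0.
Proof.
move=> H; apply/mpolyP => m; rewrite mcoeff0.
exact: (@van_coef N (mdeg m) p H m erefl).
Qed.

End Van.
Section MxLemmas.
Variable F : fieldType.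

Lemma iso_rank N s (Wm : 'M[F]_(s,N)) (Bm : 'M[F]_N) :
  Wm *m Bm *m Wm^T = 0 -> (2 * N <= 2 * \rank Wm + \rank Bm)%N ->
  forall a : 'rV_N, a *m Bm *m Wm^T = 0 -> (a <= Wm)%MS.
Proof.
move=> Hiso Hr a Ha.
set K := Bm *m Wm^T.
have sWK : (Wm <= kermx K)%MS by apply/sub_kermxP; rewrite /K mulmxA.
have saK : (a <= kermx K)%MS by apply/sub_kermxP; rewrite /K mulmxA.
have rK := mxrank_ker K.
have rmin := mxrank_mul_min Bm (Wm^T).
rewrite mxrank_tr -/K in rmin.
have rKN : (\rank K <= N)%N by apply: rank_leq_row.
have rBN : (\rank Bm <= N)%N by apply: rank_leq_row.
have rWN : (\rank Wm <= N)%N by apply: rank_leq_col.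
have le : (\rank (kermx K) <= \rank Wm)%N by rewrite rK; lia.
have := mxrank_leqif_sup sWK; case=> _ /esym Heq.
have sKW : (kermx K <= Wm)%MS.
  by rewrite Heq eqn_leq le (mxrankS sWK).
exact: submx_trans saK sKW.
Qed.

Lemma rank_iso N s (Wm : 'M[F]_(s,N)) (Bm : 'M[F]_N) :
  Bm^T = - Bm -> Wm *m Bm *m Wm^T = 0 ->
  (forall a : 'rV_N, a *m Bm *m Wm^T = 0 -> (a <= Wm)%MS) ->
  (2 * N <= 2 * \rank Wm + \rank Bm)%N.
Proof.
move=> Hsk Hiso Hmax.
set K := Bm *m Wm^T.
have sWK : (Wm <= kermx K)%MS by apply/sub_kermxP; rewrite /K mulmxA.
have sKW : (kermx K <= Wm)%MS.
  apply/row_subP => i; apply: Hmax; rewrite -mulmxA -/K.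
  by apply/sub_kermxP; rewrite (submx_trans (row_sub _ _)).
have eqKW : \rank (kermx K) = \rank Wm by apply/eqP; rewrite eqn_leq !mxrankS.
have rK := mxrank_ker K.
have KT : K^T = Wm *m Bm^T by rewrite /K trmx_mul trmxK.
have rKT : \rank K = \rank (Wm *m Bm^T) by rewrite -KT mxrank_tr.
have HmK := mxrank_mul_ker Wm (Bm^T).
have sBK : (kermx Bm^T <= Wm)%MS.
  apply: submx_trans sKW; apply/sub_kermxP.
  have := mulmx_ker (Bm^T); rewrite Hsk mulmxN => /eqP; rewrite oppr_eq0 => /eqP H.
  by rewrite /K mulmxA H mul0mx.
have capE : \rank (Wm :&: kermx Bm^T)%MS = \rank (kermx Bm^T).
  by apply: eqmx_rank; rewrite capmxSr sub_capmx sBK submx_refl.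
rewrite capE mxrank_ker mxrank_tr in HmK.
have rBN : (\rank Bm <= N)%N by apply: rank_leq_row.
have rKN : (\rank K <= N)%N by apply: rank_leq_row.
lia.
Qed.

End MxLemmas.
Section RankPoly.
Variable R : realType.

Definition evmx N p q (A : 'M[{mpoly R[N]}]_(p,q)) (x : 'I_N -> R) : 'M[R]_(p,q) :=
  map_mx (meval x) A.

Definition Cmx N p q (P : 'M[R]_(p,q)) : 'M[{mpoly R[N]}]_(p,q) :=
  map_mx (fun c => c%:MP) P.

Lemma evmxC N p q (P : 'M[R]_(p,q)) x : evmx (Cmx N P) x = P.
Proof. by apply/matrixP => i j; rewrite !mxE mevalC. Qed.

Lemma rank_poly N p q (A : 'M[{mpoly R[N]}]_(p,q)) (x0 : 'I_N -> R) :
  exists Q : {mpoly R[N]}, Q.@[x0] != 0 /\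
   forall x, Q.@[x] != 0 -> (\rank (evmx A x0) <= \rank (evmx A x))%N.
Proof.
set A0 := evmx A x0; set r := \rank A0.
pose P : 'M[R]_(r,p) := pid_mx r *m invmx (col_ebase A0).
pose Qm : 'M[R]_(q,r) := invmx (row_ebase A0) *m pid_mx r.
exists (\det (Cmx N P *m A *m Cmx N Qm)).
have evQ : forall x, (\det (Cmx N P *m A *m Cmx N Qm)).@[x] = \det (P *m evmx A x *m Qm).
  move=> x; rewrite -det_map_mx /= !map_mxM.
  by rewrite -/(evmx _ x) -/(evmx (Cmx N P) x) -/(evmx (Cmx N Qm) x) !evmxC.
have H0 : P *m A0 *m Qm = 1%:M.
  rewrite /P /Qm; set ce := col_ebase A0; set re := row_ebase A0.
  have E : A0 = ce *m pid_mx r *m re by rewrite /ce /re mulmx_ebase.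
  transitivity ((pid_mx r : 'M_(r,p)) *m (invmx ce *m ce) *m (pid_mx r : 'M_(p,q)) *m (re *m invmx re) *m (pid_mx r : 'M_(q, r))).
    by rewrite {1}E !mulmxA.
  rewrite mulVmx ?col_ebase_unit // mulmxV ?row_ebase_unit // mulmx1 mulmx1.
  rewrite pid_mx_id ?rank_leq_row // pid_mx_id ?rank_leq_col //.
  by rewrite pid_mx_1.
split; first by rewrite evQ -/A0 H0 det1 oner_neq0.
move=> x; rewrite evQ => Hd.
have U : P *m evmx A x *m Qm \in unitmx by rewrite unitmxE unitfE.
have := mxrank_unit U => Er.
rewrite -{1}Er.
apply: leq_trans (mxrankM_maxl _ _) _.
exact: mxrankM_maxr.
Qed.

End RankPoly.
Section Lin.
Variable R : realType.

Definition islin (V W : lmodType R) (F : V -> W) :=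
  forall (a : R) x y, F (a *: x + y) = a *: F x + F y.

Lemma lin0 (V W : lmodType R) (F : V -> W) : islin F -> F 0 = 0.
Proof.
move=> HF; have := HF 1 0 0; rewrite scale1r !addr0 scale1r.
by move/(congr1 (fun z => z - F 0)); rewrite subrr addrK => <-.
Qed.

Lemma linD (V W : lmodType R) (F : V -> W) : islin F -> forall x y, F (x + y) = F x + F y.
Proof. by move=> HF x y; have := HF 1 x y; rewrite !scale1r. Qed.

Lemma linZ (V W : lmodType R) (F : V -> W) : islin F -> forall a x, F (a *: x) = a *: F x.
Proof. by move=> HF a x; rewrite -[a *: x]addr0 HF lin0 // addr0. Qed.

Lemma linN (V W : lmodType R) (F : V -> W) : islin F -> forall x, F (- x) = - F x.
Proof. by move=> HF x; rewrite -scaleN1r linZ // scaleN1r. Qed.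

Lemma linsum (V W : lmodType R) (F : V -> W) : islin F ->
  forall (I : Type) (r : seq I) (P : pred I) (c : I -> R) (u : I -> V),
  F (\sum_(i <- r | P i) c i *: u i) = \sum_(i <- r | P i) c i *: F (u i).
Proof.
move=> HF I r P c u; elim/big_rec2: _ => [|i y1 y2 _ <-]; first exact: lin0.
by rewrite HF.
Qed.

Lemma dot_sumr p (z : 'rV[R]_p) (I : Type) (r : seq I) (P : pred I) (c : I -> R) (u : I -> 'rV_p) :
  dot z (\sum_(i <- r | P i) c i *: u i) = \sum_(i <- r | P i) c i * dot z (u i).
Proof.
rewrite /dot; under eq_bigr => k _ do rewrite summxE mulr_sumr.
rewrite exchange_big /=; apply: eq_bigr => i _; rewrite mulr_sumr.
by apply: eq_bigr => k _; rewrite mxE; ring.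
Qed.

Lemma dotC p (a b : 'rV[R]_p) : dot a b = dot b a.
Proof. by rewrite /dot; apply: eq_bigr => i _; rewrite mulrC. Qed.

Lemma dot_lin p (z : 'rV[R]_p) : islin (fun u : 'rV[R]_p => (dot z u : R^o)).
Proof.
move=> a x y; rewrite /dot /=.
rewrite [X in _ = X + _](_ : _ = a * \sum_(i < p) z 0 i * x 0 i) //.
rewrite mulr_sumr -big_split; apply: eq_bigr => i _ /=.
by rewrite !mxE; ring.
Qed.

Lemma dotD p (z a b : 'rV[R]_p) : dot z (a + b) = dot z a + dot z b.
Proof. exact: (linD (dot_lin z)). Qed.
Lemma dotZ p (z a : 'rV[R]_p) c : dot z (c *: a) = c * dot z a.
Proof. exact: (linZ (dot_lin z)). Qed.
Lemma dotN p (z a : 'rV[R]_p) : dot z (- a) = - dot z a.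
Proof. exact: (linN (dot_lin z)). Qed.
Lemma dot0 p (z : 'rV[R]_p) : dot z 0 = 0.
Proof. exact: (lin0 (dot_lin z)). Qed.
Lemma dotB p (z a b : 'rV[R]_p) : dot z (a - b) = dot z a - dot z b.
Proof. by rewrite dotD dotN. Qed.

Lemma dot_row_mx p q (a c : 'rV[R]_p) (b d : 'rV[R]_q) :
  dot (row_mx a b) (row_mx c d) = dot a c + dot b d.
Proof. by rewrite /dot big_split_ord /=; congr (_ + _); apply: eq_bigr => i _; rewrite !(row_mxEl, row_mxEr). Qed.

Lemma bil_expand k q (G : 'rV[R]_k -> 'rV[R]_k -> 'rV[R]_q) (z : 'rV[R]_q) :
  (forall b, islin (G^~ b)) -> (forall a, islin (G a)) ->
  forall a b, dot z (G a b) = \sum_i \sum_j a 0 i * b 0 j * dot z (G 'e_i 'e_j).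
Proof.
move=> Hl Hr a b.
rewrite {1}(row_sum_delta a) (linsum (Hl b)) dot_sumr; apply: eq_bigr => i _.
rewrite {1}(row_sum_delta b) (linsum (Hr _)) dot_sumr mulr_sumr; apply: eq_bigr => j _.
by rewrite mulrA.
Qed.

Lemma matrix_form N (Bm : 'M[R]_N) (a b : 'rV[R]_N) :
  (a *m Bm *m b^T) 0 0 = \sum_i \sum_j a 0 i * b 0 j * Bm i j.
Proof.
rewrite mxE; under eq_bigr => j _ do rewrite mxE mulr_suml.
rewrite exchange_big; apply: eq_bigr => i _; apply: eq_bigr => j _.
by rewrite !mxE; ring.
Qed.

Lemma mx_entry s t N (A : 'M[R]_(s,N)) (C : 'M[R]_(N,t)) k l :
  (A *m C) k l = (row k A *m col l C) 0 0.
Proof. by rewrite !mxE; apply: eq_bigr => j _; rewrite !mxE. Qed.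

End Lin.
Section Main.
Variable R : realType.
Variables n m : nat.
Variable br : 'rV[R]_n -> 'rV[R]_n -> 'rV[R]_n.
Variable act : 'rV[R]_n -> 'rV[R]_m -> 'rV[R]_m.
Hypothesis Hlie : is_lie_algebra br.
Hypothesis Hrep : is_representation br act.

Local Notation sb := (semidirect_bracket br act).

Lemma brl b : islin (br^~ b).
Proof. by case: Hlie => H _ _ _ a x y; rewrite H. Qed.
Lemma brr a : islin (br a).
Proof. by case: Hlie => _ H _ _ c x y; rewrite H. Qed.
Lemma brxx x : br x x = 0.
Proof. by case: Hlie. Qed.
Lemma actl u : islin (act^~ u).
Proof. by case: Hrep => H _ _ a x y; rewrite H. Qed.
Lemma actr X : islin (act X).
Proof. by case: Hrep => _ H _ a x y; rewrite H. Qed.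

Lemma dot0l p (b : 'rV[R]_p) : dot 0 b = 0.
Proof. by rewrite dotC dot0. Qed.

Lemma sb_rowmx (a1 b1 : 'rV[R]_n) (a2 b2 : 'rV[R]_m) :
  sb (row_mx a1 a2) (row_mx b1 b2) = row_mx (br a1 b1) (act a1 b2 - act b1 a2).
Proof. by rewrite /semidirect_bracket !row_mxKl !row_mxKr. Qed.

Lemma sbl b : islin (sb^~ b).
Proof.
move=> c x y /=.
rewrite -[x]hsubmxK -[y]hsubmxK -[b]hsubmxK scale_row_mx add_row_mx !sb_rowmx.
rewrite scale_row_mx add_row_mx (brl _ c) (actl _ c) (actr _ c).
congr row_mx; rewrite scalerBr opprD addrACA //.
Qed.

Lemma sbr a : islin (sb a).
Proof.
move=> c x y /=.
rewrite -[x]hsubmxK -[y]hsubmxK -[a]hsubmxK scale_row_mx add_row_mx !sb_rowmx.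
rewrite scale_row_mx add_row_mx (brr _ c) (actr _ c) (actl _ c).
congr row_mx; rewrite scalerBr opprD addrACA //.
Qed.

Lemma sbxx a : sb a a = 0.
Proof. by rewrite -[a]hsubmxK sb_rowmx brxx subrr row_mx0. Qed.

Lemma anti_gen p (G : 'rV[R]_p -> 'rV[R]_p -> 'rV[R]_p) :
  (forall b, islin (G^~ b)) -> (forall a, islin (G a)) -> (forall a, G a a = 0) ->
  forall x y, G y x = - G x y.
Proof.
move=> Hl Hr H0 x y; have := H0 (x + y).
rewrite (linD (Hl _)) !(linD (Hr _)) !H0 add0r addr0 => /eqP.
by rewrite addr_eq0 => /eqP ->; rewrite opprK.
Qed.

Lemma sb_anti x y : sb y x = - sb x y.
Proof. exact: anti_gen sbl sbr sbxx x y. Qed.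
Lemma br_anti x y : br y x = - br x y.
Proof. exact: anti_gen brl brr brxx x y. Qed.

Lemma B_rowmx (M a1 b1 : 'rV[R]_n) (v a2 b2 : 'rV[R]_m) :
  dot (row_mx M v) (sb (row_mx a1 a2) (row_mx b1 b2)) =
  dot M (br a1 b1) + (dot v (act a1 b2) - dot v (act b1 a2)).
Proof. by rewrite sb_rowmx dot_row_mx dotB. Qed.

Lemma dot_act_X (v : 'rV[R]_m) X u : dot v (act X u) = \sum_i X 0 i * dot v (act 'e_i u).
Proof. by rewrite {1}(row_sum_delta X) (linsum (actl u)) dot_sumr. Qed.

Lemma dot_act (v : 'rV[R]_m) X u : dot v (act X u) = - dot (rho_dual act X v) u.
Proof.
rewrite {1}(row_sum_delta u) (linsum (actr X)) dot_sumr.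
rewrite [dot (rho_dual _ _ _) u]/dot -sumrN; apply: eq_bigr => j _.
by rewrite mxE mulNr opprK mulrC.
Qed.

Lemma stab_dot (v : 'rV[R]_m) X : Stab act v X -> forall u, dot v (act X u) = 0.
Proof. by move=> H u; rewrite dot_act H dot0l oppr0. Qed.

Lemma stabP (v : 'rV[R]_m) X : (forall j, dot v (act X 'e_j) = 0) -> Stab act v X.
Proof. by move=> H; apply/matrixP => i j; rewrite !mxE H oppr0. Qed.

Lemma act0l u : act 0 u = 0.
Proof. exact: (lin0 (actl u)). Qed.
Lemma br0r a : br a 0 = 0.
Proof. exact: (lin0 (brr a)). Qed.
Lemma br0l a : br 0 a = 0.
Proof. exact: (lin0 (brl a)). Qed.

Lemma grad_entry N (f : {mpoly R[N]}) x i : grad f x 0 i = ev (mderiv i f) x.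
Proof. by rewrite mxE. Qed.

Lemma grad_stab (f : {mpoly R[n + m]}) :
  (forall (M L : 'rV[R]_n) (v : 'rV[R]_m),
      Stab_perp act v L -> ev f (row_mx M v) = ev f (row_mx (M + L) v)) ->
  forall M v, Stab act v (gradM f M v).
Proof.
move=> HF M v; apply: stabP => j.
set a := gradM f M v.
pose L : 'rV[R]_n := \row_i dot v (act 'e_i 'e_j).
have dotL : forall X, dot X L = dot v (act X 'e_j).
  by move=> X; rewrite dot_act_X /dot; apply: eq_bigr => i _; rewrite mxE.
have HL : forall t : R, Stab_perp act v (t *: L).
  by move=> t X HX; rewrite dotC dotZ dotL stab_dot // mulr0.
have := @Dd0 R (n + m) (fun i => (row_mx M v) 0 i) (fun i => (row_mx L 0) 0 i) f.
have -> : Dd (fun i => (row_mx M v) 0 i) (fun i => (row_mx L 0) 0 i) f = dot a L.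
  rewrite /Dd dotC.
  have -> : a = lsubmx (grad f (row_mx M v)) by [].
  rewrite -[row_mx L 0]/(row_mx L (0 : 'rV_m)).
  transitivity (dot (row_mx L (0 : 'rV_m)) (grad f (row_mx M v))).
    by rewrite /dot; apply: eq_bigr => i _; rewrite grad_entry.
  by rewrite -{1}[grad f _]hsubmxK dot_row_mx dot0l addr0.
rewrite -dotL; apply => t.
have := HF M (t *: L) v (HL t); rewrite /ev => ->.
apply: meval_eq => i.
have -> : row_mx (M + t *: L) v = row_mx M v + t *: row_mx L (0 : 'rV_m).
  by rewrite scale_row_mx add_row_mx scaler0 addr0.
by rewrite !mxE.
Qed.


Lemma comm_dense (f g : {mpoly R[n + m]}) (p : {mpoly R[m]}) : p != 0 ->
  (forall v, ev p v != 0 -> forall M, dot M (br (gradM f M v) (gradM g M v)) = 0) ->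
  forall M v, dot M (br (gradM f M v) (gradM g M v)) = 0.
Proof.
move=> p0 H M v.
pose lq : (n + m).-tuple {mpoly R[m]} :=
  [tuple (match split k with inl i => (M 0 i)%:MP | inr j => 'X_j end) | k < n + m].
have ev_sub : forall (h : {mpoly R[n + m]}) (w : 'rV[R]_m),
    (h \mPo lq).@[fun j => w 0 j] = ev h (row_mx M w).
  move=> h w; rewrite comp_mpoly_meval /ev; apply: meval_eq => k.
  rewrite tnth_mktuple; case: splitP => [i Hk|j Hk].
    by rewrite mevalC (_ : k = lshift m i) ?row_mxEl //; apply/val_inj.
  by rewrite mevalXU (_ : k = rshift n j) ?row_mxEr //; apply/val_inj.
pose E := \sum_i \sum_j ((mderiv (lshift m i) f \mPo lq) * (mderiv (lshift m j) g \mPo lq)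
             * (dot M (br 'e_i 'e_j))%:MP).
have evE : forall w : 'rV_m, E.@[fun j => w 0 j] = dot M (br (gradM f M w) (gradM g M w)).
  move=> w; rewrite (@bil_expand _ _ _ _ M brl brr) /E rmorph_sum; apply: eq_bigr => i _.
  rewrite rmorph_sum; apply: eq_bigr => j _.
  by rewrite !rmorphM /= mevalC !ev_sub /gradM !mxE.
have Ep0 : E * p = 0.
  apply: mpoly_van => w; pose v' : 'rV[R]_m := \row_j w j.
  rewrite (@meval_eq _ _ w (fun j => v' 0 j)); last by move=> j; rewrite mxE.
  rewrite mevalM; case: (eqVneq (ev p v') 0) => [Hp|Hp].
    by rewrite /ev in Hp; rewrite Hp mulr0.
  by rewrite evE H // mul0r.
have E0 : E = 0 by move/eqP: Ep0; rewrite mulf_eq0 (negbTE p0) orbF => /eqP.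
by rewrite -evE E0 meval0.
Qed.



Lemma lsub_lin : islin (@lsubmx R 1 n m).
Proof. by move=> c x y; apply/rowP => i; rewrite !mxE. Qed.
Lemma rsub_lin : islin (@rsubmx R 1 n m).
Proof. by move=> c x y; apply/rowP => i; rewrite !mxE. Qed.
Lemma row0_lin : islin (@row_mx R 1 n m 0).
Proof. by move=> c x y; rewrite scale_row_mx add_row_mx scaler0 addr0. Qed.

Lemma e_rshift (j : 'I_m) : ('e_(rshift n j) : 'rV[R]_(n + m)) = row_mx 0 'e_j.
Proof.
apply/rowP => k; case: (splitP k) => [i Hk|i Hk].
  rewrite (_ : k = lshift m i); last by apply/val_inj.
  rewrite row_mxEl !mxE /=.
  suff -> : (lshift m i == rshift n j) = false by [].
  apply/negbTE; rewrite -val_eqE /=; apply/eqP => E.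
  by have := ltn_ord i; rewrite E ltnNge leq_addr.
rewrite (_ : k = rshift n i); last by apply/val_inj.
rewrite row_mxEr !mxE /=.
have -> : (rshift n i == rshift n j) = (i == j) by apply/eqP/eqP => [/rshift_inj|->].
done.
Qed.

Lemma mderivX_ev N (k i : 'I_N) (xf : 'I_N -> R) : (mderiv i ('X_k : {mpoly R[N]})).@[xf] = (k == i)%:R.
Proof.
rewrite mderivX mnm1E mevalZ; case: (eqVneq k i) => [->|_].
  by rewrite submm_ mpolyX0 meval1 mulr1.
by rewrite mul0r.
Qed.

Lemma gradX N (k : 'I_N) x : grad ('X_k : {mpoly R[N]}) x = 'e_k.
Proof. by apply/rowP => i; rewrite !mxE /ev mderivX_ev eqxx /= eq_sym. Qed.

Lemma stab0 v : Stab act v 0.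
Proof. by apply: stabP => j; rewrite act0l dot0. Qed.

Variable fs : seq {mpoly R[n + m]}.
Hypothesis Hinv : forall f, f \in fs -> forall (M L : 'rV[R]_n) (v : 'rV[R]_m),
      Stab_perp act v L -> ev f (row_mx M v) = ev f (row_mx (M + L) v).
Hypothesis Hgen : exists p : {mpoly R[m]}, p != 0 /\
      forall v : 'rV[R]_m, ev p v != 0 -> complete_commutative_on_stab br act fs v.

Definition S := fs ++ [seq 'X_(rshift n j) | j <- enum 'I_m].

Lemma gradS f M v : f \in S ->
  Stab act v (lsubmx (grad f (row_mx M v))) /\
  (f \notin fs -> lsubmx (grad f (row_mx M v)) = 0).
Proof.
rewrite mem_cat => /orP [Hf|/mapP [j _ ->]].
  by split; [exact: grad_stab (Hinv Hf) M v | rewrite Hf].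
by rewrite gradX e_rshift row_mxKl; split => //; exact: stab0.
Qed.

Lemma comm_all f g x : f \in S -> g \in S -> dot x (sb (grad f x) (grad g x)) = 0.
Proof.
move=> Hf Hg; rewrite -[x]hsubmxK.
set M := lsubmx x; set v := rsubmx x.
have [Sf Zf] := gradS M v Hf; have [Sg Zg] := gradS M v Hg.
rewrite -[grad f _]hsubmxK -[grad g _]hsubmxK B_rowmx !stab_dot // subrr addr0.
case: (boolP (f \in fs)) => Ff; last by rewrite Zf // br0l dot0.
case: (boolP (g \in fs)) => Fg; last by rewrite Zg // br0r dot0.
have [p [p0 Hp]] := Hgen.
apply: (comm_dense p0) => w Hw M'.
by have [H _] := Hp w Hw; apply: H.
Qed.

Definition Wp : 'M[{mpoly R[n + m]}]_(size S, n + m) := \matrix_(k, i) mderiv i S`_k.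
Definition Bp : 'M[{mpoly R[n + m]}]_(n + m) :=
  \matrix_(i, j) \sum_k (sb 'e_i 'e_j) 0 k *: 'X_k.
Definition Wm (x : 'rV[R]_(n + m)) := evmx Wp (fun i => x 0 i).
Definition Bm (x : 'rV[R]_(n + m)) := evmx Bp (fun i => x 0 i).

Lemma Wm_row x k : row k (Wm x) = grad S`_k x.
Proof. by apply/rowP => i; rewrite !mxE. Qed.

Lemma Bm_entry x i j : Bm x i j = dot x (sb 'e_i 'e_j).
Proof.
rewrite !mxE raddf_sum /dot; apply: eq_bigr => k _.
by rewrite /= mevalZ mevalXU mulrC.
Qed.

Lemma Bm_form x a b : dot x (sb a b) = (a *m Bm x *m b^T) 0 0.
Proof.
rewrite matrix_form (@bil_expand _ _ _ _ x sbl sbr); apply: eq_bigr => i _.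
by apply: eq_bigr => j _; rewrite Bm_entry.
Qed.

Lemma Bm_skew x : (Bm x)^T = - Bm x.
Proof. by apply/matrixP => i j; rewrite [LHS]mxE [RHS]mxE !Bm_entry sb_anti dotN. Qed.

Lemma mx_entry1 N t (a : 'rV[R]_N) (C : 'M[R]_(N, t)) l : (a *m C) 0 l = (a *m col l C) 0 0.
Proof. by rewrite !mxE; apply: eq_bigr => j _; rewrite !mxE. Qed.

Lemma Wrow x g : g \in S -> (grad g x <= Wm x)%MS.
Proof.
move=> Hg; have Hk : (index g S < size S)%N by rewrite index_mem.
have := row_sub (Ordinal Hk) (Wm x); rewrite Wm_row /=.
by rewrite nth_index.
Qed.

Lemma iso_mat x : Wm x *m Bm x *m (Wm x)^T = 0.
Proof.
apply/matrixP => k l; rewrite mx_entry row_mul -tr_row !Wm_row -Bm_form mxE.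
by apply: comm_all; apply: mem_nth.
Qed.

Lemma perp_mat x a : (forall l, dot x (sb a (row l (Wm x))) = 0) ->
  a *m Bm x *m (Wm x)^T = 0.
Proof.
move=> H; apply/matrixP => i l; rewrite ord1 mx_entry1 -tr_row -Bm_form H mxE //.
Qed.

Lemma perp_mat' x a : a *m Bm x *m (Wm x)^T = 0 ->
  forall l, dot x (sb a (row l (Wm x))) = 0.
Proof.
by move=> H l; rewrite Bm_form tr_row -mx_entry1 H mxE.
Qed.

Lemma span_mx x a : span_of [seq grad f x | f <- S] a <-> (a <= Wm x)%MS.
Proof.
have E : size [seq grad f x | f <- S] = size S by rewrite size_map.
have Hr : forall k : 'I_(size S), [seq grad f x | f <- S]`_k = row k (Wm x).
  by move=> k; rewrite Wm_row (nth_map 0).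
split.
  move=> [c ->]; apply: summx_sub => k _; apply: scalemx_sub.
  rewrite (nth_map 0); last by rewrite -E.
  by apply: Wrow; rewrite mem_nth // -E.
move/submxP => [D ->]; rewrite mulmx_sum_row.
pose Dn (i : nat) : R := if insub i is Some k then D 0 k else 0.
exists (fun k => Dn k).
transitivity (\sum_(0 <= i < size S) Dn i *: [seq grad f x | f <- S]`_i).
  by rewrite big_mkord; apply: eq_bigr => k _; rewrite Hr /Dn valK.
by rewrite -E big_mkord.
Qed.

Lemma exists_nonroot N (p : {mpoly R[N]}) : p != 0 -> exists v, ev p v != 0.
Proof.
move=> p0; apply: NNPP => Hn; move/eqP: p0; apply.
apply: mpoly_van => w.
have H : ev p (\row_i w i) = 0.
  case: (eqVneq (ev p (\row_i w i)) 0) => // Hne; exfalso; apply: Hn.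
  by exists (\row_i w i).
move: H; rewrite /ev (@meval_eq _ _ (fun i => (\row_i w i) 0 i) w) // => i.
by rewrite mxE.
Qed.


Lemma good_point : exists x0, forall a : 'rV[R]_(n + m), a *m Bm x0 *m (Wm x0)^T = 0 -> (a <= Wm x0)%MS.
Proof.
have [p [p0 Hp]] := Hgen.
have [v0 Hv0] := exists_nonroot p0.
have [Hc [q [q0 Hq]]] := Hp v0 Hv0.
have [M0 HM0] := exists_nonroot q0.
have [Hsub Hiso Hmax] := Hq M0 HM0.
exists (row_mx M0 v0) => a Ha.
have Hperp := perp_mat' Ha.
have HS : forall g, g \in S -> dot (row_mx M0 v0) (sb a (grad g (row_mx M0 v0))) = 0.
  move=> g Hg; have Hk : (index g S < size S)%N by rewrite index_mem.
  by have := Hperp (Ordinal Hk); rewrite Wm_row /= nth_index.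
set X := lsubmx a; set u := rsubmx a.
have Ea : a = row_mx X u by rewrite hsubmxK.
have HX : Stab act v0 X.
  apply: stabP => j.
  have Hg : 'X_(rshift n j) \in S.
    by rewrite mem_cat; apply/orP; right; apply: map_f; rewrite mem_enum.
  have := HS _ Hg; rewrite gradX e_rshift Ea B_rowmx br0r dot0 act0l dot0 subr0 add0r //.
have Hf : forall f, f \in fs -> dot M0 (br X (gradM f M0 v0)) = 0.
  move=> f Ff; have Hg : f \in S by rewrite mem_cat Ff.
  have Sf := grad_stab (Hinv Ff) M0 v0.
  have := HS _ Hg; rewrite -[grad f _]hsubmxK Ea B_rowmx (stab_dot HX).
  by rewrite (stab_dot Sf) subrr addr0.
set GM := [seq gradM f M0 v0 | f <- fs].
have Hkk : forall k : 'I_(size GM), (k < size fs)%N.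
  by move=> k; have := ltn_ord k; move: (nat_of_ord k) => kk; rewrite /GM size_map.
have Hspan0 : forall y, span_of GM y -> dot M0 (br X y) = 0.
  move=> y [c ->]; rewrite (linsum (brr X)) dot_sumr big1 // => k _.
  rewrite (nth_map 0 _ _ (Hkk k)) Hf ?mulr0 //; exact: mem_nth.
have XS : span_of GM X.
  apply: (Hmax (fun y => span_of GM y \/ y = X)).
  - by move=> y Hy; left.
  - by move=> y [Hy|->]; [exact: Hsub|].
  - move=> y z [Hy|->] [Hz|->].
    + exact: Hiso.
    + by rewrite br_anti dotN Hspan0 // oppr0.
    + exact: Hspan0.
    + by rewrite brxx dot0.
  - by right.
have [c Ec] := XS.
pose z := \sum_(k < size GM) c k *: grad fs`_k (row_mx M0 v0).
have zW : (z <= Wm (row_mx M0 v0))%MS.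
  apply: summx_sub => k _; apply: scalemx_sub; apply: Wrow.
  by rewrite mem_cat mem_nth.
have lz : lsubmx z = X.
  rewrite /z (linsum lsub_lin) Ec; apply: eq_bigr => k _.
  by rewrite (nth_map 0 _ _ (Hkk k)).
have Ediff : a - z = row_mx 0 (u - rsubmx z).
  by rewrite Ea -{1}[z]hsubmxK lz opp_row_mx add_row_mx subrr.
have dW : (row_mx (0 : 'rV_n) (u - rsubmx z) <= Wm (row_mx M0 v0))%MS.
  rewrite (row_sum_delta (u - rsubmx z)) (linsum row0_lin).
  apply: summx_sub => j _; apply: scalemx_sub.
  rewrite -e_rshift -(gradX _ (row_mx M0 v0)); apply: Wrow.
  by rewrite mem_cat; apply/orP; right; apply: map_f; rewrite mem_enum.
by rewrite -[a](subrK z) Ediff addmx_sub.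
Qed.

Lemma main_thm : complete_commutative_set sb S.
Proof.
split.
  by move=> f g Hf Hg x; exact: comm_all.
have [x0 Hx0] := good_point.
have Hr0 := rank_iso (Bm_skew x0) (iso_mat x0) Hx0.
have [QW [QW0 HQW]] := rank_poly Wp (fun i => x0 0 i).
have [QB [QB0 HQB]] := rank_poly Bp (fun i => x0 0 i).
exists (QW * QB); split.
  apply/negP => /eqP Q0; have := mulf_neq0 QW0 QB0.
  by rewrite -mevalM Q0 meval0 eqxx.
move=> x; rewrite /ev mevalM mulf_eq0 negb_or => /andP [HW HB].
have rW := HQW _ HW; have rB := HQB _ HB.
have Hr : (2 * (n + m) <= 2 * \rank (Wm x) + \rank (Bm x))%N.
  apply: (leq_trans Hr0); rewrite leq_add // leq_mul2l rW orbT //.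
have Hperp := iso_rank (iso_mat x) Hr.
split => //.
- move=> a b /span_mx /submxP [D1 ->] /span_mx /submxP [D2 ->] /=.
  rewrite Bm_form trmx_mul !mulmxA -(mulmxA D1 (Wm x) (Bm x)).
  by rewrite -(mulmxA D1 (Wm x *m Bm x)) iso_mat mulmx0 mul0mx mxE.
- move=> W' HW' _ HisoW' a Ha; apply/span_mx; apply: Hperp; apply: perp_mat => l.
  apply: HisoW' => //; apply: HW'; apply/span_mx; exact: row_sub.
Qed.

End Main.

Theorem lemma13 (R : realType) (n m : nat)
  (br : 'rV[R]_n -> 'rV[R]_n -> 'rV[R]_n)
  (act : 'rV[R]_n -> 'rV[R]_m -> 'rV[R]_m)
  (Hlie : is_lie_algebra br)
  (Hrep : is_representation br act)
  (fs : seq {mpoly R[n + m]})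
  (Hinv : forall f, f \in fs -> forall (M L : 'rV[R]_n) (v : 'rV[R]_m),
      Stab_perp act v L -> ev f (row_mx M v) = ev f (row_mx (M + L) v))
  (Hgen : exists p : {mpoly R[m]}, p != 0 /\
      forall v : 'rV[R]_m, ev p v != 0 -> complete_commutative_on_stab br act fs v) :
  complete_commutative_set (semidirect_bracket br act)
    (fs ++ [seq 'X_(rshift n j) | j <- enum 'I_m]).
Proof. exact: (main_thm Hlie Hrep Hinv Hgen). Qed.
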